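(* Let $h>0$, let $(\tau,\mu):\mathbb R\to\mathbb R^2$ be a solution of the system $\tau'=1+K(\tau,\mu)\mu$, $\mu'=-K(\tau,\mu)\tau$, and set $k(s)=K(\tau(s),\mu(s))$. Then $k$ has at most one zero $s_1$; if it has one, then $k<0$ on $(-\infty,s_1)$ and $k>0$ on $(s_1,+\infty)$.
   Context: Fix $h>0$. For $(\tau,\mu)\in\mathbb R^2$ put $r^2=\tau^2+\mu^2$ and define $K:\mathbb R^2\to\mathbb R$ by $$K(\tau,\mu)=\frac{2\big(\tau^2+h^2(1+\mu^2)\big)\tau+(h^2-1)(1+\mu^2)\mu}{(1+r^2)(h^2+r^2)}.$$ Consider the autonomous ODE system $\tau'=1+K(\tau,\mu)\mu$, $\mu'=-K(\tau,\mu)\tau$ for functions $s\mapsto(\tau(s),\mu(s))$; all its solutions are defined on $\mathbb R$. *)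

(* Defs.v *)
From Stdlib Require Import Reals.
Open Scope R_scope.

Definition Kfun (h tau mu : R) : R :=
  let r2 := tau ^ 2 + mu ^ 2 in
  (2 * (tau ^ 2 + h ^ 2 * (1 + mu ^ 2)) * tau + (h ^ 2 - 1) * (1 + mu ^ 2) * mu)
  / ((1 + r2) * (h ^ 2 + r2)).

Definition is_solution (h : R) (tau mu : R -> R) : Prop :=
  forall s : R,
    derivable_pt_lim tau s (1 + Kfun h (tau s) (mu s) * mu s) /\
    derivable_pt_lim mu s (- (Kfun h (tau s) (mu s) * tau s)).

(* Main.v *)
Require Import Defs.
From Stdlib Require Import Reals Lra Classical.
From Coquelicot Require Import Coquelicot.
Open Scope R_scope.

Lemma deriv_sign (f:R->R) x l: derivable_pt_lim f x l -> 0 < l ->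
  exists d, 0<d /\ (forall y, x < y < x + d -> f x < f y) /\ (forall y, x - d < y < x -> f y < f x).
Proof.
intros H Hl. destruct (H l Hl) as [d Hd]. exists d. split; [apply cond_pos|]. split; intros y Hy.
- assert (H0: y-x<>0) by lra. assert (H1: Rabs (y-x) < d) by (rewrite Rabs_right; lra).
  specialize (Hd _ H0 H1). replace (x + (y-x)) with y in Hd by ring.
  apply Rabs_def2 in Hd. destruct Hd as [Hd1 Hd2].
  assert (Hq: 0 < (f y - f x)/(y-x)) by lra.
  assert (0 < (f y - f x)/(y-x) * (y-x)) by (apply Rmult_lt_0_compat; lra).
  replace ((f y - f x)/(y-x) * (y-x)) with (f y - f x) in H2 by (field; lra). lra.
- assert (H0: y-x<>0) by lra. assert (H1: Rabs (y-x) < d) by (rewrite Rabs_left; lra).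
  specialize (Hd _ H0 H1). replace (x + (y-x)) with y in Hd by ring.
  apply Rabs_def2 in Hd. destruct Hd as [Hd1 Hd2].
  assert (Hq: 0 < (f y - f x)/(y-x)) by lra.
  assert (0 < (f y - f x)/(y-x) * (x-y)) by (apply Rmult_lt_0_compat; lra).
  replace ((f y - f x)/(y-x) * (x-y)) with (f x - f y) in H2 by (field; lra). lra.
Qed.

Lemma cont_pos (f:R->R) c : continuity_pt f c -> 0 < f c ->
  exists d, 0 < d /\ forall y, Rabs (y - c) < d -> 0 < f y.
Proof.
intros H Hc. unfold continuity_pt, continue_in, limit1_in, limit_in in H.
destruct (H (f c) Hc) as [d [Hd Hd']]. exists d. split; auto. intros y Hy.
destruct (Req_dec y c) as [->|Hne]; auto.
assert (Hr := Hd' y). simpl in Hr. unfold R_dist in Hr.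
assert (Rabs (f y - f c) < f c) by (apply Hr; split; [split; [exact I| auto] | auto]).
apply Rabs_def2 in H0. lra.
Qed.

Lemma cont_neg (f:R->R) c : continuity_pt f c -> f c < 0 ->
  exists d, 0 < d /\ forall y, Rabs (y - c) < d -> f y < 0.
Proof.
intros H Hc. unfold continuity_pt, continue_in, limit1_in, limit_in in H.
destruct (H (- f c)) as [d [Hd Hd']]. lra. exists d. split; auto. intros y Hy.
destruct (Req_dec y c) as [->|Hne]; auto.
assert (Hr := Hd' y). simpl in Hr. unfold R_dist in Hr.
assert (Rabs (f y - f c) < - f c) by (apply Hr; split; [split; [exact I| auto] | auto]).
apply Rabs_def2 in H0. lra.
Qed.

Lemma keyL (f : R -> R) :
  (forall x, exists l, derivable_pt_lim f x l) ->
  (forall x, f x = 0 -> exists l, 0 < l /\ derivable_pt_lim f x l) ->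
  forall a b, a < b -> 0 <= f a -> 0 < f b.
Proof.
intros Hd Hz a b Hab Ha.
assert (Hc : forall x, continuity_pt f x).
{ intro x. destruct (Hd x) as [l Hl]. apply derivable_continuous_pt. exists l; exact Hl. }
set (T := fun x => a <= x <= b /\ forall y, a <= y <= x -> 0 <= f y).
assert (HT: bound T). { exists b. intros x [Hx _]. lra. }
assert (Ha' : T a). { split. lra. intros y Hy. replace y with a by lra. auto. }
destruct (completeness T HT (ex_intro _ a Ha')) as [c [Hub Hlub]].
assert (Hac : a <= c) by (apply Hub; auto).
assert (Hcb : c <= b) by (apply Hlub; intros x [Hx _]; lra).
assert (Hleft : forall y, a <= y < c -> 0 <= f y).
{ intros y Hy. destruct (Rle_dec y a) as [Hya|Hya]. replace y with a by lra; auto.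
  destruct (classic (exists x, T x /\ y <= x)) as [[x [[Hx1 Hx2] Hyx]]|Hn].
  - apply Hx2; lra.
  - exfalso. assert (c <= y). { apply Hlub. intros x Hx. destruct (Rle_dec x y); auto.
      exfalso; apply Hn; exists x; split; auto; lra. } lra. }
assert (Hfc : 0 <= f c).
{ destruct (Rle_dec 0 (f c)) as [|Hn]; auto. exfalso.
  destruct (cont_neg f c (Hc c)) as [d [Hd0 Hd1]]. lra.
  destruct (Req_dec c a) as [->|Hne]. lra.
  set (y := Rmax a (c - d/2)).
  assert (a <= y < c). { unfold y. split. apply Rmax_l. apply Rmax_lub_lt; lra. }
  assert (Rabs (y - c) < d). { rewrite Rabs_left by lra. unfold y.
    assert (c - d/2 <= Rmax a (c - d/2)) by apply Rmax_r. lra. }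
  specialize (Hd1 y H0). specialize (Hleft y H). lra. }
assert (HTc : T c).
{ split. lra. intros y Hy. destruct (Req_dec y c) as [->|]; auto. apply Hleft; lra. }
assert (Hfc' : 0 < f c).
{ destruct Hfc as [|Hf0]; auto. exfalso. symmetry in Hf0.
  destruct (Hz c Hf0) as [l [Hl Hdl]].
  destruct (deriv_sign f c l Hdl Hl) as [d [Hd0 [Hr Hlft]]].
  destruct (Req_dec c a) as [->|Hne].
  - set (x := Rmin (a + d/2) b).
    assert (a < x). { unfold x. apply Rmin_glb_lt; lra. }
    assert (x <= a + d/2) by apply Rmin_l. assert (x <= b) by apply Rmin_r.
    assert (T x). { split. lra. intros y Hy. destruct (Req_dec y a) as [->|]. lra.
      left. rewrite <- Hf0. apply Hr. lra. }
    assert (x <= a) by (apply Hub; auto). lra.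
  - set (y := Rmax a (c - d/2)).
    assert (a <= y < c). { unfold y. split. apply Rmax_l. apply Rmax_lub_lt; lra. }
    assert (c - d/2 <= y) by apply Rmax_r.
    assert (f y < f c) by (apply Hlft; lra). specialize (Hleft y H). lra. }
destruct (Req_dec c b) as [<-|Hne]; auto. exfalso.
destruct (cont_pos f c (Hc c) Hfc') as [d [Hd0 Hd1]].
set (x := Rmin (c + d/2) b).
assert (c < x). { unfold x. apply Rmin_glb_lt; lra. }
assert (x <= c + d/2) by apply Rmin_l. assert (x <= b) by apply Rmin_r.
assert (T x). { split. lra. intros y Hy. destruct (Rle_dec y c).
  destruct HTc as [_ HTc]. apply HTc; lra. left. apply Hd1. rewrite Rabs_right; lra. }
assert (x <= c) by (apply Hub; auto). lra.
Qed.

Lemma D_pos h t m : 0 < h -> 0 < (1 + (t ^ 2 + m ^ 2)) * (h ^ 2 + (t ^ 2 + m ^ 2)).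
Proof. intros. apply Rmult_lt_0_compat; nra. Qed.

Theorem claim4 (h : R) (tau mu : R -> R) :
  0 < h ->
  is_solution h tau mu ->
  (forall s1 s2 : R,
      Kfun h (tau s1) (mu s1) = 0 -> Kfun h (tau s2) (mu s2) = 0 -> s1 = s2) /\
  (forall s1 : R, Kfun h (tau s1) (mu s1) = 0 ->
     (forall s, s < s1 -> Kfun h (tau s) (mu s) < 0) /\
     (forall s, s1 < s -> 0 < Kfun h (tau s) (mu s))).
Proof.
intros Hh Hsol.
set (k := fun s => Kfun h (tau s) (mu s)).
assert (Hdt : forall s, is_derive tau s (1 + k s * mu s)).
{ intro s. apply is_derive_Reals. apply (proj1 (Hsol s)). }
assert (Hdm : forall s, is_derive mu s (- (k s * tau s))).
{ intro s. apply is_derive_Reals. apply (proj2 (Hsol s)). }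
assert (Hd : forall x, exists l, derivable_pt_lim k x l).
{ intro x. assert (He : ex_derive k x).
  { unfold k, Kfun. auto_derive.
    assert (HD := D_pos h (tau x) (mu x) Hh). simpl in HD. repeat split; try (eexists; now eauto); lra. }
  destruct He as [l Hl]. exists l. apply is_derive_Reals. exact Hl. }
assert (Hz : forall x, k x = 0 -> exists l, 0 < l /\ derivable_pt_lim k x l).
{ intros x Hk.
  set (N := fun s => 2 * (tau s ^ 2 + h ^ 2 * (1 + mu s ^ 2)) * tau s + (h ^ 2 - 1) * (1 + mu s ^ 2) * mu s).
  set (D := fun s => (1 + (tau s ^ 2 + mu s ^ 2)) * (h ^ 2 + (tau s ^ 2 + mu s ^ 2))).
  assert (HD : 0 < D x) by (apply D_pos; auto).
  assert (HN : N x = 0).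
  { unfold k, Kfun in Hk. fold (D x) in Hk. fold (N x) in Hk.
    assert (N x = N x / D x * D x) by (field; lra). rewrite H, Hk. ring. }
  assert (HdN : is_derive N x (2 * (3 * tau x ^ 2 + h ^ 2 * (1 + mu x ^ 2)))).
  { unfold N. auto_derive.
    - repeat split; eexists; eauto.
    - replace (Derive (fun y => tau y) x) with (1 + k x * mu x) by (symmetry; apply is_derive_unique; apply Hdt).
      replace (Derive (fun y => mu y) x) with (- (k x * tau x)) by (symmetry; apply is_derive_unique; apply Hdm).
      rewrite Hk. ring. }
  assert (HdD : ex_derive D x).
  { unfold D. auto_derive. repeat split; eexists; eauto. }
  destruct HdD as [dD HdD].
  assert (Hq := is_derive_div N D x _ _ HdN HdD ltac:(lra)).
  eexists. split; [|apply is_derive_Reals; exact Hq].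
  rewrite HN, Rmult_0_l, Rminus_0_r. apply Rdiv_lt_0_compat; [|apply pow_lt; lra].
  apply Rmult_lt_0_compat; [|lra]. nra. }
assert (L := keyL k Hd Hz).
split.
- intros s1 s2 H1 H2. fold (k s1) in H1. fold (k s2) in H2.
  destruct (Rtotal_order s1 s2) as [Hl|[Heq|Hl]]; auto.
  + assert (0 < k s2) by (apply L with s1; lra). lra.
  + assert (0 < k s1) by (apply L with s2; lra). lra.
- intros s1 H1. fold (k s1) in H1. split; intros s Hs; fold (k s).
  + destruct (Rlt_dec (k s) 0) as [|Hn]; auto.
    assert (0 < k s1) by (apply L with s; lra). lra.
  + apply L with s1; lra.
Qed.
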